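(* Let $p$ be a prime, $q=p^r$, and let $l$ be an integer with $1\le l\le 2r-1$. If there is a power of two which divides $r$ but does not divide $l$, then every root of the equation $X^{1+p^l}+1=0$ in $\mathrm{GF}(q^2)$ lies in $\mathrm{GF}(q)$; equivalently, $\alpha^{1+p^l}+\beta^{1+p^l}\neq0$ for every basis $\{\alpha,\beta\}$ of $\mathrm{GF}(q^2)$ over $\mathrm{GF}(q)$. *)

(* Defs.v *)
From HB Require Import structures.
From mathcomp Require Import all_boot all_order all_algebra all_field.
Set Implicit Arguments. Unset Strict Implicit. Unset Printing Implicit Defensive.
Import GRing.Theory.
Local Open Scope ring_scope.

Definition in_GFq (F : finFieldType) (q : nat) (x : F) : bool := x ^+ q == x.

(* {a, b} is a basis of F over GF(q) (F of order q^2): a and b are linearly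
   independent over GF(q) (two independent vectors in a 2-dimensional space). *)
Definition GFq_basis (F : finFieldType) (q : nat) (a b : F) : Prop :=
  forall c d : F, in_GFq q c -> in_GFq q d -> c * a + d * b = 0 -> c = 0 /\ d = 0.

(* Main.v *)
Require Import Defs.
From HB Require Import structures.
From mathcomp Require Import all_boot all_order all_algebra all_field.
Import GRing.Theory.
Local Open Scope ring_scope.


Lemma nt (l r k : nat) : (0 < l)%N -> (2 ^ k %| r)%N -> ~~ (2 ^ k %| l)%N ->
  (2 * gcdn l r %| r)%N.
Proof.
move=> l0 hr hl.
have g0 : (0 < gcdn l r)%N by rewrite gcdn_gt0 l0.
have gl := dvdn_gcdl l r.
have er : r = (r %/ gcdn l r * gcdn l r)%N by rewrite divnK // dvdn_gcdr.
move: g0 gl er; move: (gcdn l r) => g; move: (r %/ g)%N => r' g0 gl er.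
case od: (odd r').
  have cp : coprime (2 ^ k) r' by rewrite coprimeXl // coprime2n.
  move: hr; rewrite er Gauss_dvdr // => hg.
  by case/negP: hl; apply: dvdn_trans hg gl.
rewrite er dvdn_pmul2r //.
by rewrite dvdn2 od.
Qed.

Section S.
Variables (F : finFieldType) (p : nat).
Hypotheses (pp : prime p) (pc : p \in [pchar F]).

Lemma negX (x : F) n : (- x) ^+ (p ^ n) = - x ^+ (p ^ n).
Proof. by apply: exprNn_pchar; rewrite pnatX pnatE // pc. Qed.

Lemma fixM (x : F) m t : x ^+ (p ^ m) = x -> x ^+ (p ^ (m * t)) = x.
Proof.
move=> h; elim: t => [|t IH]; first by rewrite muln0 expn0 expr1.
by rewrite mulnS expnD exprM h IH.
Qed.

End S.

Theorem proposition6 (F : finFieldType) (p r l : nat) :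
  prime p -> p \in [pchar F] -> #|F| = ((p ^ r) ^ 2)%N ->
  (1 <= l <= (2 * r).-1)%N ->
  (exists k : nat, (2 ^ k %| r)%N /\ ~~ (2 ^ k %| l)%N) ->
  (forall x : F, x ^+ (1 + p ^ l) + 1 = 0 -> in_GFq (p ^ r) x) /\
  (forall a b : F, GFq_basis (p ^ r) a b -> a ^+ (1 + p ^ l) + b ^+ (1 + p ^ l) != 0).
Proof.
move=> pp pc cF /andP[l0 _] [k [hr hl]].
have all2r (y : F) : y ^+ (p ^ (2 * r)) = y.
  by rewrite mulnC expnM -cF expf_card.
have part1 (x : F) : x ^+ (1 + p ^ l) + 1 = 0 -> in_GFq (p ^ r) x.
  move=> hx.
  have hx' : x * x ^+ (p ^ l) = -1 by rewrite -exprS; apply/eqP; rewrite -addr_eq0; apply/eqP.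
  have x0 : x != 0 by apply/eqP => x0; move: hx'; rewrite x0 mul0r => /eqP; rewrite eq_sym oppr_eq0 oner_eq0.
  have xp : x ^+ (p ^ l) = - x^-1.
    by apply: (mulfI x0); rewrite hx' mulrN mulfV.
  have x2l : x ^+ (p ^ (2 * l)) = x.
    by rewrite mul2n -addnn expnD exprM xp negX // exprVn xp invrN invrK opprK.
  have g2 : x ^+ (p ^ (2 * gcdn l r)) = x.
    case: (egcdnP r l0) => u v huv _.
    have e : ((2 * l) * u = (2 * r) * v + 2 * gcdn l r)%N.
      by rewrite -!mulnA -mulnDr (mulnC l) huv (mulnC r).
    have := @fixM F p x _ u x2l; rewrite e expnD exprM.
    by rewrite (@fixM F p x _ v (all2r x)).
  rewrite /in_GFq; have := @nt l r k l0 hr hl; case/dvdnP=> t ->.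
  by rewrite mulnC (@fixM F p x _ t g2).
split => // a b hab; apply/negP => /eqP h.
have in1 : in_GFq (p ^ r) (1 : F) by rewrite /in_GFq expr1n.
have in0 : in_GFq (p ^ r) (0 : F) by rewrite /in_GFq expr0n expn_eq0 eqn0Ngt prime_gt0.
have [b0 | b0] := eqVneq b 0.
  move: h; rewrite b0 expr0n addn_eq0 /= addr0 => /eqP; rewrite expf_eq0 => /andP[_ /eqP a0].
  have [_ h1] : (0:F) = 0 /\ (1:F) = 0 by apply: hab => //; rewrite a0 b0 !mulr0 addr0.
  by move/eqP: h1; rewrite oner_eq0.
have hx : (a / b) ^+ (1 + p ^ l) + 1 = 0.
  rewrite expr_div_n; move/eqP: h; rewrite addr_eq0 => /eqP ->.
  by rewrite mulNr mulfV ?expf_neq0 // addNr.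
have gx := part1 _ hx.
have inN : in_GFq (p ^ r) (- (a / b)) by rewrite /in_GFq negX //; move/eqP: gx => ->.
have [h1 _] : (1:F) = 0 /\ - (a / b) = 0.
  by apply: hab => //; rewrite mul1r mulNr divfK // subrr.
by move/eqP: h1; rewrite oner_eq0.
Qed.
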